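(* Let $D$ be a Gauss diagram of an oriented virtual knot, and let $T$ be a triple of chords of $D$. Then $T$ is 3-movable if and only if $T$ is matched and all three chords of $T$ have the same 3-sign.
   Context: Gauss diagram: given an oriented virtual knot diagram, traverse the knot and record the classical crossings in order (each crossing is met twice). Place these points counterclockwise around a circle, and for each classical crossing draw a directed chord (arrow) from the point corresponding to passing over the crossing to the point corresponding to passing under it; each chord is labeled with the sign ($\pm1$) of the crossing. Virtual crossings do not appear. Triples and arcs: a triple of chords $T$ under consideration has its six endpoints lying on three arcs of the circle, each arc containing exactly two endpoints of chords of $T$ and no other chord endpoints of $D$; the three arcs are met in a cyclic (counterclockwise) order around the circle. 3-movable: $T$ is 3-movable if its three chords (equivalently, the corresponding three classical crossings of a virtual knot diagram with Gauss diagram $D$) can be repositioned by a classical Reidemeister III move, i.e. they are the three crossings of a Reidemeister III configuration: three strands in a disk pairwise crossing once, one strand passing over both others and one strand passing under both others, with the three arcs of the Gauss diagram corresponding to the three strands. Matched: $T$ is matched if one of its three arcs contains the two arrowheads of two chords of $T$, another arc contains the two arrowtails of two chords of $T$, and the third arc contains one head and one tail belonging to two distinct chords of $T$. 3-sign: for each chord $c$ of a matched triple define three numbers: its sign ($\pm1$, the sign of the crossing); its parity, $+1$ if $c$ intersects an even number of the other chords of $T$ and $-1$ if an odd number; its direction, $+1$ if $c$ points counterclockwise around the three arcs (from an arc to the next arc in the counterclockwise cyclic order of the three arcs) and $-1$ if it points clockwise. The 3-sign of $c$ is the product of its sign, parity and direction. *)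

(* Defs.v *)
From mathcomp Require Import all_boot all_order all_algebra.
Set Implicit Arguments. Unset Strict Implicit. Unset Printing Implicit Defensive.
Import Order.TTheory GRing.Theory Num.Theory.
Local Open Scope ring_scope.

(* A Gauss diagram with n chords: the 2n chord endpoints are the positions
   0, 1, ..., 2n-1 placed counterclockwise on the circle (in the order met
   when traversing the knot).  Chord c goes from its tail [tl c] (passing
   over) to its head [hd c] (passing under); [sg c] is its sign (+1 or -1). *)
Definition is_gauss (n : nat) (tl hd : 'I_n -> 'I_(n.*2)) (sg : 'I_n -> int)
  : Prop :=
  [/\ injective tl, injective hd, (forall i j, tl i != hd j)
    & (forall i, sg i = 1 \/ sg i = -1)].

Definition det2 (x y : rat * rat) : rat := x.1 * y.2 - x.2 * y.1.

Definition sgn (x : rat) : int := if 0 < x then 1 else -1.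

Definition cyc (a b c : nat) : bool :=
  [|| (a < b < c)%N, (b < c < a)%N | (c < a < b)%N].

Section Triple.
Variables (n : nat) (tl hd : 'I_n -> 'I_(n.*2)) (sg : 'I_n -> int).
(* The triple T = {t 0, t 1, t 2}; its three arcs are k = 0,1,2, arc k
   consisting of the two consecutive positions q k and q k + 1 (mod 2n). *)
Variables (t : 'I_3 -> 'I_n) (q : 'I_3 -> 'I_(n.*2)).

Definition succp (p : 'I_(n.*2)) : nat := (p.+1 %% n.*2)%N.
Definition arc_fst (k : 'I_3) : nat := q k.
Definition arc_snd (k : 'I_3) : nat := succp (q k).
Definition in_arc (k : 'I_3) (p : nat) : bool :=
  (p == arc_fst k) || (p == arc_snd k).

Definition owns (i : 'I_3) (p : nat) : bool :=
  (p == val (tl (t i))) || (p == val (hd (t i))).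
Definition is_Tend (p : nat) : bool := [exists i, owns i p].
Definition is_head (p : nat) : bool := [exists i, p == val (hd (t i))].
Definition is_tail (p : nat) : bool := [exists i, p == val (tl (t i))].

Definition arc_positions : seq nat :=
  flatten [seq [:: arc_fst k; arc_snd k] | k <- enum 'I_3].

(* T is a triple of (distinct) chords whose six endpoints lie on the three
   arcs, each arc containing exactly two endpoints of T and no other
   endpoint of D (so the two endpoints of an arc are consecutive). *)
Definition triple_arcs : Prop :=
  [/\ injective t, uniq arc_positions & all is_Tend arc_positions].

Definition matched : Prop :=
  exists kH kT kM : 'I_3,
    [&& kH != kT, kH != kM, kT != kM,
        is_head (arc_fst kH) && is_head (arc_snd kH),
        is_tail (arc_fst kT) && is_tail (arc_snd kT) &
                ((is_head (arc_fst kM) && is_tail (arc_snd kM))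
         || (is_tail (arc_fst kM) && is_head (arc_snd kM)))
        && ~~ [exists i, owns i (arc_fst kM) && owns i (arc_snd kM)]].

(* two chords intersect iff their endpoints interleave on the circle *)
Definition crosses (c d : 'I_n) : bool :=
  let a := minn (tl c) (hd c) in
  let b := maxn (tl c) (hd c) in
  ((a < tl d < b)%N) != ((a < hd d < b)%N).

Definition parity (i : 'I_3) : int :=
  (-1) ^+ #|[set j : 'I_3 | (j != i) && crosses (t i) (t j)]|.

Definition direction (i : 'I_3) : int :=
  if [exists kA, exists kB, exists kC,
        [&& kA != kB, kA != kC, kB != kC,
            in_arc kA (tl (t i)), in_arc kB (hd (t i)) &
            cyc (arc_fst kA) (arc_fst kB) (arc_fst kC)]]
  then 1 else -1.

Definition three_sign (i : 'I_3) : int := sg (t i) * parity i * direction i.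

(* ---- Reidemeister III configurations ----
   Three oriented strands s = 0,1,2 in a disk, realised as three oriented
   straight lines P s + a * v s in general position (pairwise crossing once,
   the three crossings distinct), with heights h s (distinct; the highest
   strand passes over both others, the lowest under both others). *)
Section RIII.
Variables (P v : 'I_3 -> rat * rat) (h : 'I_3 -> nat).

(* parameter along strand s of its crossing with strand u *)
Definition param (s u : 'I_3) : rat :=
  det2 ((P u).1 - (P s).1, (P u).2 - (P s).2) (v u) / det2 (v s) (v u).

Definition lines_general : Prop :=
  (forall s u, s != u -> det2 (v s) (v u) != 0) /\
  (forall s u w, s != u -> s != w -> u != w -> param s u != param s w).

Definition first_on (s u : 'I_3) : bool :=
  [forall w, ((w != s) && (w != u)) ==> (param s u < param s w)].

Definition cr_sign (s u : 'I_3) : int :=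
  if (h u < h s)%N then sgn (det2 (v s) (v u)) else sgn (det2 (v u) (v s)).

(* strand s corresponds to arc (sigma s); its crossings, in the order met
   along s, correspond to the two endpoints of the arc in ccw order *)
Definition pos_on (sigma : 'I_3 -> 'I_3) (s u : 'I_3) : nat :=
  if first_on s u then arc_fst (sigma s) else arc_snd (sigma s).

Definition realises (sigma : 'I_3 -> 'I_3) : Prop :=
  forall s u : 'I_3, s != u -> exists i : 'I_3,
    (if (h u < h s)%N
     then (val (tl (t i)) == pos_on sigma s u) && (val (hd (t i)) == pos_on sigma u s)
     else (val (hd (t i)) == pos_on sigma s u) && (val (tl (t i)) == pos_on sigma u s))
    /\ sg (t i) = cr_sign s u.
End RIII.

Definition three_movable : Prop :=
  exists sigma : 'I_3 -> 'I_3, injective sigma /\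
  exists (P v : 'I_3 -> rat * rat) (h : 'I_3 -> nat),
    [/\ lines_general P v, injective h & realises P v h sigma].

End Triple.

Definition ix0 : 'I_3 := @Ordinal 3 0 isT.
Definition ix1 : 'I_3 := @Ordinal 3 1 isT.
Definition ix2 : 'I_3 := @Ordinal 3 2 isT.

(* Main.v *)
Require Import Defs.
From mathcomp Require Import all_boot all_order all_algebra.
From mathcomp Require Import zify ring lra.
Set Implicit Arguments. Unset Strict Implicit. Unset Printing Implicit Defensive.
Import Order.TTheory GRing.Theory Num.Theory.

Notation "a &&& b" := (if a then b else false) (at level 57, right associativity).
Notation "a ||| b" := (if a then true else b) (at level 58, right associativity).
Notation "a ==>> b" := (if a then b else true) (at level 59, right associativity).

Definition I3 : seq 'I_3 := [:: ix0; ix1; ix2].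
Definition ex3 (P : 'I_3 -> bool) := P ix0 ||| P ix1 ||| P ix2.
Definition all3 (P : 'I_3 -> bool) := P ix0 &&& P ix1 &&& P ix2.
Definition exb (P : bool -> bool) := P true ||| P false.
Definition b3 {T} (x0 x1 x2 : T) (s : 'I_3) : T :=
  match nat_of_ord s with 0 => x0 | 1 => x1 | _ => x2 end.
Definition nxt (s : 'I_3) : 'I_3 := b3 ix1 ix2 ix0 s.

Definition code (p : 'I_3 * bool) : nat := p.1 + 3 * p.2.
Definition decode (m : nat) : 'I_3 * bool :=
  match m with 0 => (ix0, false) | 1 => (ix1, false) | 2 => (ix2, false)
  | 3 => (ix0, true) | 4 => (ix1, true) | _ => (ix2, true) end.
Definition eqI (a b : 'I_3) := eqn a b.
Definition eqS (p q : 'I_3 * bool) := eqn p.1 q.1 &&& (p.2 == q.2).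
Definition locOf (l : seq nat) (e : 'I_3 * bool) := decode (nth 0 l (code e)).

Section Abs.
Variables (l : seq nat) (o : bool) (s0 s1 s2 : bool).
Notation loc := (locOf l).
Notation sb := (b3 s0 s1 s2).

Definition rk (p : 'I_3 * bool) : nat :=
  2 * (if o then nat_of_ord p.1 else b3 0 2 1 p.1) + p.2.
Definition acyc p1 p2 p3 := cyc (rk p1) (rk p2) (rk p3).

Definition a_is_head p := ex3 (fun i => eqS p (loc (i, false))).
Definition a_is_tail p := ex3 (fun i => eqS p (loc (i, true))).
Definition a_owns i p := eqS p (loc (i, true)) ||| eqS p (loc (i, false)).
Definition a_matched := ex3 (fun kH => ex3 (fun kT => ex3 (fun kM =>
  ~~ eqI kH kT &&& ~~ eqI kH kM &&& ~~ eqI kT kM &&&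
  (a_is_head (kH, false) &&& a_is_head (kH, true)) &&&
  (a_is_tail (kT, false) &&& a_is_tail (kT, true)) &&&
  ((a_is_head (kM, false) &&& a_is_tail (kM, true))
       ||| (a_is_tail (kM, false) &&& a_is_head (kM, true))) &&&
  ~~ ex3 (fun i => a_owns i (kM, false) &&& a_owns i (kM, true))))).
Definition a_crosses i j :=
  acyc (loc (i, true)) (loc (j, true)) (loc (i, false))
  != acyc (loc (i, true)) (loc (j, false)) (loc (i, false)).
Definition a_cnt i := count (fun j => ~~ eqI j i &&& a_crosses i j) I3.
Definition a_in_arc (k : 'I_3) (p : 'I_3 * bool) := eqS p (k, false) ||| eqS p (k, true).
Definition a_dir i := ex3 (fun kA => ex3 (fun kB => ex3 (fun kC =>
  ~~ eqI kA kB &&& ~~ eqI kA kC &&& ~~ eqI kB kC &&& a_in_arc kA (loc (i, true)) &&&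
  a_in_arc kB (loc (i, false)) &&& acyc (kA, false) (kB, false) (kC, false)))).
Definition a_ts i : bool := sb i (+) odd (a_cnt i) (+) a_dir i.
Definition a_rhs := a_matched &&& (a_ts ix0 == a_ts ix1) &&& (a_ts ix1 == a_ts ix2).

Definition Ccon (f0 f1 f2 d0 d1 d2 : bool) :=
  (((~~ f1) == d0) == ~~ (f2 == d2)) &&& (~~ (f0 == d2) == ((~~ f1) == d1)).
Definition hvalid (h0 h1 h2 : bool) := ~~ (h0 &&& h1 &&& h2) &&& (h0 ||| h1 ||| h2).

Section Cfg.
Variables (sig : 'I_3 -> 'I_3) (hb fb db : 'I_3 -> bool).
Definition Fa s u := if eqI u (nxt s) then fb s else ~~ fb s.
Definition Da s u := if eqI u (nxt s) then db s else ~~ db u.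
Definition ov s u := if eqI u (nxt s) then hb s else ~~ hb u.
Definition a_real_pair s u := ex3 (fun i =>
  (if ov s u then eqS (loc (i, true)) (sig s, ~~ Fa s u) &&& eqS (loc (i, false)) (sig u, ~~ Fa u s)
   else eqS (loc (i, false)) (sig s, ~~ Fa s u) &&& eqS (loc (i, true)) (sig u, ~~ Fa u s))
  &&& (sb i == (if ov s u then Da s u else Da u s))).
Definition a_realises := all3 (fun s => all3 (fun u => ~~ eqI s u ==>> a_real_pair s u)).
End Cfg.

Definition a_lhs :=
  ex3 (fun x0 => ex3 (fun x1 => ~~ eqI x1 x0 &&& ex3 (fun x2 => ~~ eqI x2 x0 &&& ~~ eqI x2 x1 &&&
  exb (fun h0 => exb (fun h1 => exb (fun h2 => hvalid h0 h1 h2 &&&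
  exb (fun f0 => exb (fun f1 => exb (fun f2 =>
  exb (fun d0 => exb (fun d1 => exb (fun d2 => Ccon f0 f1 f2 d0 d1 d2 &&&
  a_realises (b3 x0 x1 x2) (b3 h0 h1 h2) (b3 f0 f1 f2) (b3 d0 d1 d2))))))))))))).
Definition a_lhs2 :=
  ex3 (fun x0 => ex3 (fun x1 => ~~ eqI x1 x0 &&&
  exb (fun h0 => exb (fun f0 => exb (fun f1 => exb (fun d0 =>
   (a_real_pair (b3 x0 x1 x1) (b3 h0 h0 h0) (b3 f0 f1 f1) (b3 d0 d0 d0) ix0 ix1 &&&
    a_real_pair (b3 x0 x1 x1) (b3 h0 h0 h0) (b3 f0 f1 f1) (b3 d0 d0 d0) ix1 ix0) &&&
  ex3 (fun x2 => ~~ eqI x2 x0 &&& ~~ eqI x2 x1 &&&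
  exb (fun h1 => exb (fun f2 => exb (fun d1 =>
   (a_real_pair (b3 x0 x1 x2) (b3 h0 h1 h1) (b3 f0 f1 f2) (b3 d0 d1 d1) ix1 ix2 &&&
    a_real_pair (b3 x0 x1 x2) (b3 h0 h1 h1) (b3 f0 f1 f2) (b3 d0 d1 d1) ix2 ix1) &&&
  exb (fun h2 => exb (fun d2 => hvalid h0 h1 h2 &&& Ccon f0 f1 f2 d0 d1 d2 &&&
   a_real_pair (b3 x0 x1 x2) (b3 h0 h1 h2) (b3 f0 f1 f2) (b3 d0 d1 d2) ix2 ix0 &&&
   a_real_pair (b3 x0 x1 x2) (b3 h0 h1 h2) (b3 f0 f1 f2) (b3 d0 d1 d2) ix0 ix2)))))))))))).
End Abs.

Definition check_all :=
  all (fun l => all (fun o => all (fun s0 => all (fun s1 => all (fun s2 =>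
    a_lhs2 l s0 s1 s2 == a_rhs l o s0 s1 s2) [:: true; false]) [:: true; false])
    [:: true; false]) [:: true; false]) (permutations (iota 0 6)).



Lemma check_allP : check_all = true.
Proof. vm_compute. reflexivity. Qed.


Variant ord3_spec : 'I_3 -> Type :=
  O3_0 : ord3_spec ix0 | O3_1 : ord3_spec ix1 | O3_2 : ord3_spec ix2.
Lemma ord3P s : ord3_spec s.
Proof.
case: s => [[|[|[|m]]] Hm] //.
- have -> : Ordinal Hm = ix0 by apply: val_inj.
  by constructor.
- have -> : Ordinal Hm = ix1 by apply: val_inj.
  by constructor.
- have -> : Ordinal Hm = ix2 by apply: val_inj.
  by constructor.
Qed.

Lemma ex3P (P : 'I_3 -> bool) : reflect (exists i, P i) (ex3 P).
Proof.
apply: (iffP idP) => [|[i Hi]].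
- rewrite /ex3; case: ifP => [H0 _|_]; first by exists ix0.
  by case: ifP => [H1 _|_ H2]; [exists ix1 | exists ix2].
- by rewrite /ex3; case: (ord3P i) Hi => ->; case: (P ix0) => //; case: (P ix1).
Qed.
Lemma all3P (P : 'I_3 -> bool) : reflect (forall i, P i) (all3 P).
Proof.
apply: (iffP idP) => [|H].
- rewrite /all3; case: ifP => // H0; case: ifP => // H1 H2 i.
  by case: (ord3P i).
- by rewrite /all3 !H.
Qed.
Lemma exbP (P : bool -> bool) : reflect (exists b, P b) (exb P).
Proof.
apply: (iffP idP) => [|[[] Hb]]; rewrite /exb.
- by case: ifP => [H _|_ H]; [exists true | exists false].
- by rewrite Hb.
- by rewrite Hb; case: (P true).
Qed.
Lemma ex3E (P : 'I_3 -> bool) : ex3 P = [exists i, P i].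
Proof. by apply/ex3P/existsP. Qed.
Lemma forall3E (P : 'I_3 -> bool) : [forall w, P w] = [&& P ix0, P ix1 & P ix2].
Proof.
apply/forallP/and3P => [H|[H0 H1 H2] w]; first by split; apply: H.
by case: (ord3P w).
Qed.
Lemma eqIE a b : eqI a b = (a == b).
Proof. by []. Qed.
Lemma eqSE p q : eqS p q = (p == q).
Proof. by case: p q => [a b] [c d]; rewrite /eqS /= xpair_eqE. Qed.
Lemma andlE a b : (a &&& b) = a && b. Proof. by []. Qed.
Lemma orlE a b : (a ||| b) = a || b. Proof. by []. Qed.
Lemma implE a b : (a ==>> b) = (a ==> b). Proof. by []. Qed.

Definition third (s u : 'I_3) : 'I_3 :=
  b3 (b3 ix0 ix2 ix1 u) (b3 ix2 ix0 ix0 u) (b3 ix1 ix0 ix0 u) s.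
Lemma thirdP s u w : s != u -> w != s -> w != u -> w = third s u.
Proof. by case: (ord3P s); case: (ord3P u); case: (ord3P w). Qed.
Lemma third_neq s u : s != u -> (third s u != s) && (third s u != u).
Proof. by case: (ord3P s); case: (ord3P u). Qed.

Definition sgnb (b : bool) : int := if b then 1%R else (-1)%R.
Lemma sgnb_inj : injective sgnb.
Proof. by case; case. Qed.
Lemma b3_0 T (x0 x1 x2 : T) : b3 x0 x1 x2 ix0 = x0. Proof. by []. Qed.
Lemma b3_1 T (x0 x1 x2 : T) : b3 x0 x1 x2 ix1 = x1. Proof. by []. Qed.
Lemma b3_2 T (x0 x1 x2 : T) : b3 x0 x1 x2 ix2 = x2. Proof. by []. Qed.


Section LHS2.
Variables (l : seq nat) (s0 s1 s2 : bool).

Lemma realises_split sig hb fb db :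
  a_realises l s0 s1 s2 sig hb fb db =
  [&& a_real_pair l s0 s1 s2 sig hb fb db ix0 ix1, a_real_pair l s0 s1 s2 sig hb fb db ix1 ix0,
      a_real_pair l s0 s1 s2 sig hb fb db ix1 ix2, a_real_pair l s0 s1 s2 sig hb fb db ix2 ix1,
      a_real_pair l s0 s1 s2 sig hb fb db ix2 ix0 & a_real_pair l s0 s1 s2 sig hb fb db ix0 ix2].
Proof.
rewrite /a_realises /all3.
case: (a_real_pair l s0 s1 s2 sig hb fb db ix0 ix1);
case: (a_real_pair l s0 s1 s2 sig hb fb db ix1 ix0);
case: (a_real_pair l s0 s1 s2 sig hb fb db ix1 ix2);
case: (a_real_pair l s0 s1 s2 sig hb fb db ix2 ix1);
case: (a_real_pair l s0 s1 s2 sig hb fb db ix2 ix0);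
case: (a_real_pair l s0 s1 s2 sig hb fb db ix0 ix2); by [].
Qed.

Lemma lhs_lhs2 : a_lhs l s0 s1 s2 -> a_lhs2 l s0 s1 s2.
Proof.
move/ex3P => [x0 /ex3P [x1]]; rewrite andlE => /andP[n10 /ex3P [x2]].
rewrite !andlE => /and3P [n20 n21 /exbP [h0 /exbP [h1 /exbP [h2]]]].
rewrite andlE => /andP[hv /exbP[f0 /exbP[f1 /exbP[f2 /exbP[d0 /exbP[d1 /exbP[d2]]]]]]].
rewrite andlE realises_split => /andP[C /andP[r01 /andP[r10 /andP[r12 /andP[r21 /andP[r20 r02]]]]]].
apply/ex3P; exists x0; apply/ex3P; exists x1; rewrite andlE n10 /=.
apply/exbP; exists h0; apply/exbP; exists f0; apply/exbP; exists f1; apply/exbP; exists d0.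
rewrite !andlE; apply/andP; split; first by apply/andP; split.
apply/ex3P; exists x2; rewrite !andlE n20 n21 /=.
apply/exbP; exists h1; apply/exbP; exists f2; apply/exbP; exists d1.
rewrite !andlE; apply/andP; split; first by apply/andP; split.
apply/exbP; exists h2; apply/exbP; exists d2.
by rewrite !andlE hv C r20 r02.
Qed.

Lemma lhs2_lhs : a_lhs2 l s0 s1 s2 -> a_lhs l s0 s1 s2.
Proof.
move/ex3P => [x0 /ex3P [x1]]; rewrite andlE => /andP[n10].
move=> /exbP [h0 /exbP [f0 /exbP [f1 /exbP [d0]]]].
rewrite !andlE => /andP[/andP[r01 r10] /ex3P [x2]].
rewrite !andlE => /and3P [n20 n21 /exbP [h1 /exbP [f2 /exbP [d1]]]].
rewrite !andlE => /andP[/andP[r12 r21] /exbP [h2 /exbP [d2]]].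
rewrite !andlE => /and4P[hv C r20 r02].
apply/ex3P; exists x0; apply/ex3P; exists x1; rewrite andlE n10 /=.
apply/ex3P; exists x2; rewrite !andlE n20 n21 /=.
apply/exbP; exists h0; apply/exbP; exists h1; apply/exbP; exists h2; rewrite andlE hv /=.
apply/exbP; exists f0; apply/exbP; exists f1; apply/exbP; exists f2.
apply/exbP; exists d0; apply/exbP; exists d1; apply/exbP; exists d2.
rewrite andlE C realises_split r20 r02 !andbT /=.
apply/and4P; split; [exact: r01 | exact: r10 | exact: r12 | exact: r21].
Qed.
End LHS2.

Local Open Scope ring_scope.

Lemma first_onE P v s u : s != u ->
  first_on P v s u = (param P v s u < param P v s (third s u)).
Proof.
move=> su; have /andP[h1 h2] := third_neq su.
rewrite /first_on; apply/forallP/idP => [H|H w].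
- by move/implyP: (H (third s u)); apply; rewrite h1 h2.
- by apply/implyP => /andP[ws wu]; rewrite (thirdP su ws wu).
Qed.

Lemma ltNne (x y : rat) : x != y -> (x < y) = ~~ (y < x).
Proof. by move=> H; rewrite ltNge le_eqVlt negb_or eq_sym H. Qed.

Lemma pos_mul (x y : rat) : x != 0 -> y != 0 -> (0 < x * y) = ((0 < x) == (0 < y)).
Proof.
move=> x0 y0; case: (ltgtP 0 x) => hx; last by rewrite -hx eqxx in x0.
- by rewrite pmulr_rgt0 //; case: (0 < y).
- rewrite nmulr_rgt0 // (ltNne y0); by case: (0 < y).
Qed.

Lemma pos_opp (x : rat) : x != 0 -> (0 < - x) = ~~ (0 < x).
Proof. by move=> x0; rewrite oppr_gt0 (ltNne x0). Qed.

Section Geo.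
Variables (P v : 'I_3 -> rat * rat).
Notation a := (param P v).
Notation d s u := (det2 (v s) (v u)).

Lemma detN s u : d u s = - d s u.
Proof. rewrite /det2; ring. Qed.

Hypothesis Hlg : lines_general P v.

Lemma d_neq0 s u : s != u -> d s u != 0.
Proof. by case: Hlg => H _; apply: H. Qed.

Lemma J1 : (a ix1 ix2 - a ix1 ix0) * d ix0 ix1 + (a ix2 ix1 - a ix2 ix0) * d ix2 ix0 = 0.
Proof.
have h01 := d_neq0 (isT : ix0 != ix1); have h12 := d_neq0 (isT : ix1 != ix2);
have h20 := d_neq0 (isT : ix2 != ix0).
have h10 := d_neq0 (isT : ix1 != ix0); have h21 := d_neq0 (isT : ix2 != ix1);
have h02 := d_neq0 (isT : ix0 != ix2).
move: h01 h12 h20 h10 h21 h02; rewrite /param /det2.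
move: (P ix0) (P ix1) (P ix2) (v ix0) (v ix1) (v ix2) => [p0 q0] [p1 q1] [p2 q2] [x0 y0] [x1 y1] [x2 y2] /=.
move=> *; field; by apply/and4P; split.
Qed.

Lemma J2 : (a ix0 ix2 - a ix0 ix1) * d ix2 ix0 + (a ix1 ix2 - a ix1 ix0) * d ix1 ix2 = 0.
Proof.
have h01 := d_neq0 (isT : ix0 != ix1); have h12 := d_neq0 (isT : ix1 != ix2);
have h20 := d_neq0 (isT : ix2 != ix0).
have h10 := d_neq0 (isT : ix1 != ix0); have h21 := d_neq0 (isT : ix2 != ix1);
have h02 := d_neq0 (isT : ix0 != ix2).
move: h01 h12 h20 h10 h21 h02; rewrite /param /det2.
move: (P ix0) (P ix1) (P ix2) (v ix0) (v ix1) (v ix2) => [p0 q0] [p1 q1] [p2 q2] [x0 y0] [x1 y1] [x2 y2] /=.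
move=> *; field; by apply/and4P; split.
Qed.

Lemma a_neq s u w : s != u -> s != w -> u != w -> a s u != a s w.
Proof. by case: Hlg => _ H; apply: H. Qed.

Lemma first_on_neg s u : s != u -> first_on P v s (third s u) = ~~ first_on P v s u.
Proof.
move=> su; have /andP[h1 h2] := third_neq su.
have us : u != s by rewrite eq_sym.
have st : s != third s u by rewrite eq_sym.
have ut : u != third s u by rewrite eq_sym.
rewrite !first_onE // -(thirdP st us ut) ltNne //.
by apply: a_neq.
Qed.

Definition fF := b3 (first_on P v ix0 ix1) (first_on P v ix1 ix2) (first_on P v ix2 ix0).
Definition dD := b3 (0 < d ix0 ix1) (0 < d ix1 ix2) (0 < d ix2 ix0).

Lemma geo_F s u : s != u -> first_on P v s u = Fa fF s u.
Proof.
case: (ord3P s); case: (ord3P u) => // _; rewrite /Fa /=; try by [].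
- exact: (first_on_neg (isT : ix0 != ix1)).
- exact: (first_on_neg (isT : ix1 != ix2)).
- exact: (first_on_neg (isT : ix2 != ix0)).
Qed.

Lemma geo_D s u : s != u -> (0 < d s u) = Da dD s u.
Proof.
case: (ord3P s); case: (ord3P u) => // _; rewrite /Da /=; try by [].
- by rewrite detN pos_opp // d_neq0.
- by rewrite detN pos_opp // d_neq0.
- by rewrite detN pos_opp // d_neq0.
Qed.

Lemma geo_C : Ccon (fF ix0) (fF ix1) (fF ix2) (dD ix0) (dD ix1) (dD ix2).
Proof.
have e1 : ~~ fF ix1 = (0 < a ix1 ix2 - a ix1 ix0).
  by rewrite /fF b3_1 -(first_on_neg (isT : ix1 != ix2)) first_onE // subr_gt0.
have e2 : fF ix2 = (0 < a ix2 ix1 - a ix2 ix0) by rewrite /fF b3_2 first_onE // subr_gt0.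
have e0 : fF ix0 = (0 < a ix0 ix2 - a ix0 ix1) by rewrite /fF b3_0 first_onE // subr_gt0.
have nB : a ix1 ix2 - a ix1 ix0 != 0 by rewrite subr_eq0; apply: a_neq.
have nC : a ix2 ix1 - a ix2 ix0 != 0 by rewrite subr_eq0; apply: a_neq.
have nA : a ix0 ix2 - a ix0 ix1 != 0 by rewrite subr_eq0; apply: a_neq.
have n01 := d_neq0 (isT : ix0 != ix1); have n12 := d_neq0 (isT : ix1 != ix2).
have n20 := d_neq0 (isT : ix2 != ix0).
have E1 : (a ix1 ix2 - a ix1 ix0) * d ix0 ix1 = - ((a ix2 ix1 - a ix2 ix0) * d ix2 ix0).
  by apply/eqP; rewrite -subr_eq0 opprK J1.
have E2 : (a ix0 ix2 - a ix0 ix1) * d ix2 ix0 = - ((a ix1 ix2 - a ix1 ix0) * d ix1 ix2).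
  by apply/eqP; rewrite -subr_eq0 opprK J2.
have F1 := congr1 (fun x => 0 < x) E1; have F2 := congr1 (fun x => 0 < x) E2.
move: F1 F2 => /=; rewrite !pos_opp ?mulf_neq0 // !pos_mul // => F1 F2.
rewrite /Ccon e1 e2 e0 /dD /= F1 F2.
rewrite b3_1 b3_2; by case: (0 < a ix2 ix1 - a ix2 ix0); case: (0 < d ix2 ix0); case: (0 < a ix1 ix2 - a ix1 ix0); case: (0 < d ix1 ix2).
Qed.
End Geo.

Local Open Scope ring_scope.

Definition Wt (f0 f1 f2 d0 d1 d2 : bool) : ('I_3 -> rat * rat) * ('I_3 -> rat * rat) :=
  match f0, f1, f2, d0, d1, d2 with
  | false, false, false, false, false, false => (b3 ((-2), (0)) ((0), (1)) ((0), (0)), b3 ((1), (1)) ((0), (-2)) ((-1), (0)))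
  | false, false, false, true, true, true => (b3 ((0), (1)) ((1), (-1)) ((0), (0)), b3 ((0), (-2)) ((1), (1)) ((-1), (0)))
  | false, false, true, false, true, true => (b3 ((-1), (0)) ((0), (0)) ((0), (3)), b3 ((-1), (-1)) ((0), (1)) ((-1), (0)))
  | false, false, true, true, false, false => (b3 ((-1), (0)) ((0), (0)) ((0), (1)), b3 ((1), (0)) ((0), (1)) ((1), (1)))
  | false, true, false, false, false, true => (b3 ((0), (1)) ((-1), (0)) ((0), (-1)), b3 ((-1), (0)) ((-1), (1)) ((0), (1)))
  | false, true, false, true, true, false => (b3 ((0), (0)) ((3), (0)) ((0), (0)), b3 ((1), (1)) ((0), (1)) ((-1), (0)))
  | false, true, true, false, true, false => (b3 ((0), (0)) ((0), (-1)) ((-2), (0)), b3 ((1), (0)) ((0), (-1)) ((1), (1)))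
  | false, true, true, true, false, true => (b3 ((-1), (0)) ((2), (0)) ((0), (0)), b3 ((1), (0)) ((1), (2)) ((0), (-1)))
  | true, false, false, false, true, false => (b3 ((0), (-1)) ((1), (1)) ((-1), (0)), b3 ((0), (1)) ((1), (2)) ((-1), (0)))
  | true, false, false, true, false, true => (b3 ((0), (-1)) ((-1), (1)) ((0), (0)), b3 ((1), (1)) ((0), (1)) ((1), (0)))
  | true, false, true, false, false, true => (b3 ((0), (0)) ((0), (-2)) ((0), (0)), b3 ((0), (1)) ((2), (-1)) ((1), (-1)))
  | true, false, true, true, true, false => (b3 ((1), (0)) ((-1), (0)) ((0), (0)), b3 ((0), (2)) ((-1), (1)) ((-1), (0)))
  | true, true, false, false, true, true => (b3 ((0), (1)) ((0), (1)) ((1), (0)), b3 ((0), (-2)) ((-1), (1)) ((-1), (0)))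
  | true, true, false, true, false, false => (b3 ((-1), (0)) ((0), (0)) ((1), (0)), b3 ((0), (2)) ((-1), (-1)) ((-1), (0)))
  | true, true, true, false, false, false => (b3 ((0), (-1)) ((0), (0)) ((1), (0)), b3 ((1), (-1)) ((-1), (-2)) ((0), (1)))
  | true, true, true, true, true, true => (b3 ((1), (0)) ((-1), (0)) ((0), (0)), b3 ((-1), (-2)) ((1), (-1)) ((0), (1)))
  | _, _, _, _, _, _ => (fun _ => (0, 0), fun _ => (0, 0))
  end.

Definition firstc P v s u := param P v s u < param P v s (third s u).
Definition lgc P v := all3 (fun s => all3 (fun u => ~~ eqI s u ==>>
  ((det2 (v s) (v u) != 0) &&& (param P v s u != param P v s (third s u))))).
Definition goodc P v fb db := lgc P v &&& all3 (fun s => all3 (fun u => ~~ eqI s u ==>>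
  ((firstc P v s u == Fa fb s u) &&& ((0 < det2 (v s) (v u)) == Da db s u)))).
Definition allb (P : bool -> bool) := P true &&& P false.

Lemma table_ok : allb (fun f0 => allb (fun f1 => allb (fun f2 =>
  allb (fun d0 => allb (fun d1 => allb (fun d2 => Ccon f0 f1 f2 d0 d1 d2 ==>>
  goodc (Wt f0 f1 f2 d0 d1 d2).1 (Wt f0 f1 f2 d0 d1 d2).2 (b3 f0 f1 f2) (b3 d0 d1 d2))))))) = true.
Proof. vm_compute. reflexivity. Qed.

Lemma allbP P : allb P = true -> forall b, P b.
Proof. by rewrite /allb; case E: (P true) => // H []. Qed.

Lemma goodc_sound P v fb db : goodc P v fb db ->
  [/\ lines_general P v, (forall s u, s != u -> first_on P v s u = Fa fb s u) &
      (forall s u, s != u -> (0 < det2 (v s) (v u)) = Da db s u)].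
Proof.
rewrite /goodc andlE => /andP[/all3P Hl /all3P Hg].
have Hl' : forall s u, s != u -> (det2 (v s) (v u) != 0) && (param P v s u != param P v s (third s u)).
  by move=> s u su; move/all3P: (Hl s) => /(_ u); rewrite implE eqIE su.
have Hg' : forall s u, s != u -> (firstc P v s u == Fa fb s u) && ((0 < det2 (v s) (v u)) == Da db s u).
  by move=> s u su; move/all3P: (Hg s) => /(_ u); rewrite implE eqIE su.
split.
- split=> [s u su|s u w su sw uw]; first by case/andP: (Hl' s u su).
  have ws : w != s by rewrite eq_sym.
  have wu : w != u by rewrite eq_sym.
  by rewrite (thirdP su ws wu); case/andP: (Hl' s u su).
- move=> s u su; rewrite first_onE //.
  by case/andP: (Hg' s u su) => /eqP.
- by move=> s u su; case/andP: (Hg' s u su) => _ /eqP.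
Qed.

Lemma geo_bwd f0 f1 f2 d0 d1 d2 : Ccon f0 f1 f2 d0 d1 d2 ->
  exists P v, [/\ lines_general P v,
    (forall s u, s != u -> first_on P v s u = Fa (b3 f0 f1 f2) s u) &
    (forall s u, s != u -> (0 < det2 (v s) (v u)) = Da (b3 d0 d1 d2) s u)].
Proof.
move=> C.
have := allbP (allbP (allbP (allbP (allbP (allbP table_ok f0) f1) f2) d0) d1) d2.
rewrite C => /goodc_sound H.
by exists (Wt f0 f1 f2 d0 d1 d2).1, (Wt f0 f1 f2 d0 d1 d2).2.
Qed.

Local Close Scope ring_scope.

Lemma uniq_map_inj (T1 T2 : eqType) (f : T1 -> T2) s x y :
  uniq (map f s) -> x \in s -> y \in s -> f x = f y -> x = y.
Proof.
elim: s => //= a s IH /andP[Ha Hu]; rewrite !inE => /orP[/eqP->|Hx] /orP[/eqP->|Hy] E //.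
- by rewrite E (map_f f Hy) in Ha.
- by rewrite -E (map_f f Hx) in Ha.
- exact: IH.
Qed.

Lemma crossE (x y z w : nat) : x != y -> x != z -> x != w -> y != z -> y != w -> z != w ->
  (((minn x y < z) && (z < maxn x y)) != ((minn x y < w) && (w < maxn x y))) = (cyc x z y != cyc x w y).
Proof. move=> *; rewrite /cyc; lia. Qed.

Lemma modwrap N x k : x < N -> k <= N -> (x + k) %% N = if x + k < N then x + k else x + k - N.
Proof.
move=> xN kN; case: ifP => h; first by rewrite modn_small.
have -> : x + k = (x + k - N) + N by lia.
by rewrite modnDr modn_small //; lia.
Qed.

Lemma cyc_rot N k x y z : k <= N -> x < N -> y < N -> z < N ->
  cyc ((x + k) %% N) ((y + k) %% N) ((z + k) %% N) = cyc x y z.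
Proof.
move=> kN xN yN zN; rewrite !modwrap //.
by do 3 case: ifP => ?; rewrite /cyc; lia.
Qed.

Lemma cyc_mono (f : nat -> nat) x y z :
  (forall i j, i < 6 -> j < 6 -> (f i < f j) = (i < j)) -> x < 6 -> y < 6 -> z < 6 ->
  cyc (f x) (f y) (f z) = cyc x y z.
Proof. by move=> H hx hy hz; rewrite /cyc !H. Qed.

Lemma enumI3 : enum 'I_3 = I3.
Proof. by apply: (inj_map val_inj); rewrite val_enum_ord. Qed.

Lemma card_I3 (P : pred 'I_3) : #|[set j | P j]| = count P I3.
Proof.
rewrite -sum1_card big_mkcond -big_enum enumI3 /= !big_cons big_nil !inE.
by case: (P ix0); case: (P ix1); case: (P ix2).
Qed.

Lemma decodeK p : decode (code p) = p.
Proof. by case: p => k b; case: (ord3P k); case: b. Qed.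
Lemma code_lt6 p : code p < 6.
Proof. by case: p => k b; case: (ord3P k); case: b. Qed.
Lemma decode_inj m m' : m < 6 -> m' < 6 -> decode m = decode m' -> m = m'.
Proof. by case: m => [|[|[|[|[|[|m]]]]]] //; case: m' => [|[|[|[|[|[|m']]]]]]. Qed.

Definition hnat (hb : 'I_3 -> bool) (s : 'I_3) : nat :=
  (s != ix0) && ov hb s ix0 + (s != ix1) && ov hb s ix1 + (s != ix2) && ov hb s ix2.
Lemma hnatP h0 h1 h2 s u : hvalid h0 h1 h2 -> s != u ->
  (hnat (b3 h0 h1 h2) u < hnat (b3 h0 h1 h2) s) = ov (b3 h0 h1 h2) s u.
Proof.
have : hvalid h0 h1 h2 ==> (s != u) ==> ((hnat (b3 h0 h1 h2) u < hnat (b3 h0 h1 h2) s) == ov (b3 h0 h1 h2) s u).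
  by case: h0; case: h1; case: h2; case: (ord3P s); case: (ord3P u).
by move=> H hv su; move: H; rewrite hv su => /eqP.
Qed.
Lemma ov_asym hb s u : s != u -> ov hb u s = ~~ ov hb s u.
Proof.
have : (s != u) ==> (ov hb u s == ~~ ov hb s u).
  by case: (ord3P s); case: (ord3P u) => //; rewrite /ov /= ?negbK.
by move=> H su; move: H; rewrite su => /eqP.
Qed.
Lemma b3_inj (x0 x1 x2 : 'I_3) : x1 != x0 -> x2 != x0 -> x2 != x1 -> injective (b3 x0 x1 x2).
Proof.
move=> a b c s u; case: (ord3P s); case: (ord3P u) => //;
  rewrite ?b3_0 ?b3_1 ?b3_2 => E; move: a b c; rewrite E ?eqxx //.
Qed.
Lemma ov_cases1 (hb : 'I_3 -> bool) : [/\ ov hb ix0 ix1 = hb ix0, ov hb ix1 ix2 = hb ix1 & ov hb ix2 ix0 = hb ix2].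
Proof. by []. Qed.
Lemma ov_cases2 (hb : 'I_3 -> bool) : [/\ ov hb ix1 ix0 = ~~ hb ix0, ov hb ix2 ix1 = ~~ hb ix1 & ov hb ix0 ix2 = ~~ hb ix2].
Proof. by []. Qed.
Lemma mem_tf (b : bool) : b \in [:: true; false].
Proof. by case: b. Qed.

Section Concrete.
Variables (n : nat) (tl hd : 'I_n -> 'I_(n.*2)) (sg : 'I_n -> int)
  (t : 'I_3 -> 'I_n) (q : 'I_3 -> 'I_(n.*2)).
Hypotheses (Hg : is_gauss tl hd sg) (Ht : triple_arcs tl hd t q).

Definition pos (p : 'I_3 * bool) : nat := if p.2 then arc_snd q p.1 else arc_fst q p.1.
Definition ep (e : 'I_3 * bool) : nat := if e.2 then val (tl (t e.1)) else val (hd (t e.1)).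
Definition allS : seq ('I_3 * bool) :=
  [:: (ix0,false); (ix0,true); (ix1,false); (ix1,true); (ix2,false); (ix2,true)].
Lemma in_allS p : p \in allS.
Proof. by case: p => k b; case: (ord3P k); case: b. Qed.

Lemma arc_posE : arc_positions q = map pos allS.
Proof. by rewrite /arc_positions enumI3. Qed.

Lemma pos_inj : injective pos.
Proof.
case: Ht => _ U _; rewrite arc_posE in U.
by move=> x y; apply: uniq_map_inj U (in_allS x) (in_allS y).
Qed.

Lemma ep_inj : injective ep.
Proof.
case: Hg => tlI hdI tlhd _; case: Ht => tI _ _.
move=> [i b] [j c]; rewrite /ep /=; case: b; case: c => /= E.
- by have := tI _ _ (tlI _ _ (val_inj E)) => ->.
- by have := tlhd (t i) (t j); rewrite (val_inj E) eqxx.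
- by have := tlhd (t j) (t i); rewrite (val_inj E) eqxx.
- by have := tI _ _ (hdI _ _ (val_inj E)) => ->.
Qed.

Lemma pos_ep p : exists e, ep e == pos p.
Proof.
case: Ht => _ _ /allP A.
have : pos p \in arc_positions q by rewrite arc_posE map_f // in_allS.
move/A => /existsP[i]; rewrite /owns => /orP[/eqP E|/eqP E].
- by exists (i, true); rewrite /ep /= -E.
- by exists (i, false); rewrite /ep /= -E.
Qed.

Definition g (p : 'I_3 * bool) : 'I_3 * bool := odflt (ix0, false) [pick e | ep e == pos p].
Lemma gE p : ep (g p) = pos p.
Proof.
rewrite /g; case: pickP => [e /eqP //|H].
by case: (pos_ep p) => e; rewrite H.
Qed.
Lemma g_inj : injective g.
Proof. by move=> x y E; apply: pos_inj; rewrite -!gE E. Qed.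

Definition loc0 := finv g.
Lemma ep_loc0 e : ep e = pos (loc0 e).
Proof. by rewrite -gE /loc0 f_finv //; apply: g_inj. Qed.
Lemma loc0_inj : injective loc0.
Proof. exact: finv_inj g_inj. Qed.

Definition ll : seq nat := [seq code (loc0 (decode m)) | m <- iota 0 6].
Notation L := (locOf ll).

Lemma LE e : L e = loc0 e.
Proof.
rewrite /locOf /ll (nth_map 0); last by rewrite size_iota code_lt6.
by rewrite nth_iota ?code_lt6 // add0n !decodeK.
Qed.

Lemma ll_perm : ll \in permutations (iota 0 6).
Proof.
rewrite mem_permutations.
have U : uniq ll.
  rewrite /ll map_inj_in_uniq ?iota_uniq // => m m'; rewrite !mem_iota !add0n => hm hm' E.
  apply: decode_inj => //; apply: loc0_inj.
  by rewrite -(decodeK (loc0 (decode m))) E decodeK.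
have S : {subset ll <= iota 0 6}.
  by move=> x /mapP[m _ ->]; rewrite mem_iota add0n code_lt6.
have [_ E] := uniq_min_size U S (eq_leq (esym (size_map _ _))).
by apply: uniq_perm => //; apply: iota_uniq.
Qed.

Lemma epE e : ep e = pos (L e).
Proof. by rewrite LE ep_loc0. Qed.
Lemma tlE i : val (tl (t i)) = pos (L (i, true)).
Proof. exact: (epE (i, true)). Qed.
Lemma hdE i : val (hd (t i)) = pos (L (i, false)).
Proof. exact: (epE (i, false)). Qed.
Lemma tlE' i : nat_of_ord (tl (t i)) = pos (L (i, true)).
Proof. exact: (epE (i, true)). Qed.
Lemma hdE' i : nat_of_ord (hd (t i)) = pos (L (i, false)).
Proof. exact: (epE (i, false)). Qed.
Lemma pos_eq x y : (pos x == pos y) = (x == y).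
Proof. exact: (inj_eq pos_inj). Qed.


Notation N := (n.*2).
Lemma N_pos : 0 < N.
Proof. by apply: (leq_ltn_trans _ (ltn_ord (q ix0))). Qed.
Lemma pos_lt p : pos p < N.
Proof.
case: p => k []; rewrite /pos /=; last exact: ltn_ord.
by rewrite /arc_snd /succp ltn_pmod // N_pos.
Qed.
Lemma pos_snd k : pos (k, true) = (pos (k, false)).+1 %% N.
Proof. by []. Qed.

Definition o := cyc (pos (ix0, false)) (pos (ix1, false)) (pos (ix2, false)).
Definition kk := N - pos (ix0, false).
Definition R p := (pos p + kk) %% N.

Lemma R_neq p p' : p != p' -> R p != R p'.
Proof.
move=> pp; apply/negP => /eqP E; move/negP: pp; apply; apply/eqP; apply: pos_inj.
have h1 := pos_lt p; have h2 := pos_lt p'; have h3 := pos_lt (ix0, false).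
move: E; rewrite /R /kk !modwrap //; try lia.
by case: ifP; case: ifP; lia.
Qed.

Lemma R_snd k : R (k, true) = (R (k, false)).+1 %% N.
Proof. rewrite /R pos_snd -!addn1 !modnDml. by rewrite -[(_ %% N).+1]addn1 modnDml addnAC. Qed.

Lemma R_lt p : R p < N.
Proof. by rewrite /R ltn_pmod // N_pos. Qed.

Lemma cyc_R a b c : cyc (pos a) (pos b) (pos c) = cyc (R a) (R b) (R c).
Proof.
have h := pos_lt (ix0, false).
by rewrite /R cyc_rot ?pos_lt ?leq_subr.
Qed.

Lemma R00 : R (ix0, false) = 0.
Proof. have h := pos_lt (ix0, false); rewrite /R /kk subnKC ?modnn //; lia. Qed.

Definition G : seq nat :=
  if o then [:: 0; 1; R (ix1, false); (R (ix1, false)).+1; R (ix2, false); (R (ix2, false)).+1]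
  else [:: 0; 1; R (ix2, false); (R (ix2, false)).+1; R (ix1, false); (R (ix1, false)).+1].

Lemma Rfacts : [/\ R (ix0, true) = 1, R (ix1, true) = (R (ix1, false)).+1,
  R (ix2, true) = (R (ix2, false)).+1 & o = (R (ix1, false) < R (ix2, false))].
Proof.
have n01 := R_neq (isT : (ix0, false) != (ix0, true)).
have n02 := R_neq (isT : (ix0, false) != (ix1, false)).
have n03 := R_neq (isT : (ix0, false) != (ix1, true)).
have n04 := R_neq (isT : (ix0, false) != (ix2, false)).
have n05 := R_neq (isT : (ix0, false) != (ix2, true)).
have n12 := R_neq (isT : (ix0, true) != (ix1, false)).
have n14 := R_neq (isT : (ix0, true) != (ix2, false)).
have n24 := R_neq (isT : (ix1, false) != (ix2, false)).
have l1 := R_lt (ix1, false); have l2 := R_lt (ix2, false).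
move: n01 n02 n03 n04 n05 n12 n14 n24.
rewrite !R_snd R00 => n01 n02 n03 n04 n05 n12 n14 n24.
have N1 : 1 < N by have := N_pos; move: n01; lia.
rewrite (modn_small N1) in n12 n14 *.
have e1 : (R (ix1, false)).+1 %% N = (R (ix1, false)).+1.
  apply: modn_small.
  have : (R (ix1, false)).+1 != N by apply: contraNneq n03 => ->; rewrite modnn.
  lia.
have e2 : (R (ix2, false)).+1 %% N = (R (ix2, false)).+1.
  apply: modn_small.
  have : (R (ix2, false)).+1 != N by apply: contraNneq n05 => ->; rewrite modnn.
  lia.
split => //.
rewrite /o cyc_R R00 /cyc; lia.
Qed.

Lemma G_mono i j : i < 6 -> j < 6 -> (nth 0 G i < nth 0 G j) = (i < j).
Proof.
have n02 := R_neq (isT : (ix0, false) != (ix1, false)).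
have n04 := R_neq (isT : (ix0, false) != (ix2, false)).
have n12 := R_neq (isT : (ix0, true) != (ix1, false)).
have n14 := R_neq (isT : (ix0, true) != (ix2, false)).
have n24 := R_neq (isT : (ix1, false) != (ix2, false)).
have n34 := R_neq (isT : (ix1, true) != (ix2, false)).
have n25 := R_neq (isT : (ix1, false) != (ix2, true)).
case: Rfacts => e0 e1 e2 eo.
move: n02 n04 n12 n14 n24 n34 n25; rewrite e0 e1 e2 R00 /G eo => a1 a2 a3 a4 a5 a6 a7.
case: (ltnP (R (ix1, false)) (R (ix2, false))) => h;
case: i => [|[|[|[|[|[|i]]]]]] // _; case: j => [|[|[|[|[|[|j]]]]]] // _ /=; lia.
Qed.

Lemma rk_lt6 b p : rk b p < 6.
Proof. by case: p => k c; case: (ord3P k); case: b; case: c. Qed.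

Lemma R_G p : R p = nth 0 G (rk o p).
Proof.
case: Rfacts => e0 e1 e2 _.
case: p => k c; rewrite /G /rk; case: o; case: (ord3P k); case: c => /=;
  by rewrite ?e0 ?e1 ?e2 ?R00.
Qed.

Lemma cycE a b c : cyc (pos a) (pos b) (pos c) = acyc o a b c.
Proof. by rewrite cyc_R !R_G /acyc cyc_mono // ?rk_lt6 //; exact: G_mono. Qed.

Lemma is_headE x : is_head hd t (pos x) = a_is_head ll x.
Proof. rewrite /is_head /a_is_head ex3E; apply: eq_existsb => i; by rewrite hdE pos_eq eqSE. Qed.
Lemma is_tailE x : is_tail tl t (pos x) = a_is_tail ll x.
Proof. rewrite /is_tail /a_is_tail ex3E; apply: eq_existsb => i; by rewrite tlE pos_eq eqSE. Qed.
Lemma ownsE i x : owns tl hd t i (pos x) = a_owns ll i x.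
Proof. by rewrite /owns /a_owns tlE hdE !pos_eq !eqSE orlE. Qed.
Lemma ex_ownsE k : [exists i, owns tl hd t i (arc_fst q k) && owns tl hd t i (arc_snd q k)]
  = ex3 (fun i => a_owns ll i (k, false) &&& a_owns ll i (k, true)).
Proof. rewrite ex3E; apply: eq_existsb => i; by rewrite -(ownsE i (k, false)) -(ownsE i (k, true)). Qed.

Lemma matchedE : matched tl hd t q <-> a_matched ll.
Proof.
have E : forall kH kT kM,
  [&& kH != kT, kH != kM, kT != kM,
        is_head hd t (arc_fst q kH) && is_head hd t (arc_snd q kH),
        is_tail tl t (arc_fst q kT) && is_tail tl t (arc_snd q kT) &
                ((is_head hd t (arc_fst q kM) && is_tail tl t (arc_snd q kM))
         || (is_tail tl t (arc_fst q kM) && is_head hd t (arc_snd q kM)))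
        && ~~ [exists i, owns tl hd t i (arc_fst q kM) && owns tl hd t i (arc_snd q kM)]]
  = (~~ eqI kH kT &&& ~~ eqI kH kM &&& ~~ eqI kT kM &&&
  (a_is_head ll (kH, false) &&& a_is_head ll (kH, true)) &&&
  (a_is_tail ll (kT, false) &&& a_is_tail ll (kT, true)) &&&
  ((a_is_head ll (kM, false) &&& a_is_tail ll (kM, true))
       ||| (a_is_tail ll (kM, false) &&& a_is_head ll (kM, true))) &&&
  ~~ ex3 (fun i => a_owns ll i (kM, false) &&& a_owns ll i (kM, true))).
  move=> kH kT kM; rewrite ex_ownsE.
  rewrite -(is_headE (kH, false)) -(is_headE (kH, true)) -(is_tailE (kT, false)) -(is_tailE (kT, true)).
  rewrite -(is_headE (kM, false)) -(is_headE (kM, true)) -(is_tailE (kM, false)) -(is_tailE (kM, true)).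
  by [].
split.
- move=> [kH [kT [kM H]]]; apply/ex3P; exists kH; apply/ex3P; exists kT; apply/ex3P; exists kM.
  by rewrite -E.
- move/ex3P=> [kH /ex3P [kT /ex3P [kM H]]]; exists kH, kT, kM; by rewrite E.
Qed.

Lemma ep_neq e e' : e != e' -> ep e != ep e'.
Proof. by move=> H; rewrite (inj_eq ep_inj). Qed.

Lemma crossesE i j : i != j -> crosses tl hd (t i) (t j) = a_crosses ll o i j.
Proof.
move=> ij; rewrite /crosses /=.
have ji : j != i by rewrite eq_sym.
have h1 : (i, true) != (i, false) by rewrite xpair_eqE andbF.
move/ep_neq: h1 => h1.
have h2 : (i, true) != (j, true) by rewrite xpair_eqE (negbTE ij).
move/ep_neq: h2 => h2.
have h3 : (i, true) != (j, false) by rewrite xpair_eqE (negbTE ij).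
move/ep_neq: h3 => h3.
have h4 : (i, false) != (j, true) by rewrite xpair_eqE (negbTE ij).
move/ep_neq: h4 => h4.
have h5 : (i, false) != (j, false) by rewrite xpair_eqE (negbTE ij).
move/ep_neq: h5 => h5.
have h6 : (j, true) != (j, false) by rewrite xpair_eqE andbF.
move/ep_neq: h6 => h6.
rewrite /ep /= in h1 h2 h3 h4 h5 h6.
by rewrite crossE // !tlE' !hdE' !cycE.
Qed.

Lemma parityE i : parity tl hd t i = ((-1) ^+ a_cnt ll o i)%R.
Proof.
rewrite /parity card_I3 /a_cnt; congr (_ ^+ _)%R; apply: eq_count => j.
case: (eqVneq j i) => [->|ji]; first by rewrite eqIE eqxx.
by rewrite crossesE 1?eq_sym // eqIE ji.
Qed.

Lemma in_arcE k x : in_arc q k (pos x) = a_in_arc k x.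
Proof.
rewrite /in_arc /a_in_arc -[arc_fst q k]/(pos (k, false)) -[arc_snd q k]/(pos (k, true)).
by rewrite !pos_eq !eqSE.
Qed.

Lemma directionE i : direction tl hd t q i = sgnb (a_dir ll o i).
Proof.
rewrite /direction /sgnb; congr (if _ then _ else _).
rewrite /a_dir ex3E; apply: eq_existsb => kA; rewrite ex3E; apply: eq_existsb => kB.
rewrite ex3E; apply: eq_existsb => kC.
rewrite tlE' hdE' !in_arcE.
rewrite -[arc_fst q kA]/(pos (kA, false)) -[arc_fst q kB]/(pos (kB, false)).
rewrite -[arc_fst q kC]/(pos (kC, false)) cycE.
by [].
Qed.

Definition sb0 := sg (t ix0) == 1%R.
Definition sb1 := sg (t ix1) == 1%R.
Definition sb2 := sg (t ix2) == 1%R.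

Lemma sgE i : sg (t i) = sgnb (b3 sb0 sb1 sb2 i).
Proof.
case: Hg => _ _ _ H; rewrite /sb0 /sb1 /sb2.
by case: (ord3P i) => /=; [case: (H (t ix0)) | case: (H (t ix1)) | case: (H (t ix2))] => ->.
Qed.

Lemma three_signE i : three_sign tl hd sg t q i = sgnb (~~ a_ts ll o sb0 sb1 sb2 i).
Proof.
rewrite /three_sign sgE parityE directionE /a_ts -signr_odd.
by case: (b3 _ _ _ i); case: (odd _); case: (a_dir _ _ _).
Qed.

Lemma rhsE : (matched tl hd t q /\
   three_sign tl hd sg t q ix0 = three_sign tl hd sg t q ix1 /\
   three_sign tl hd sg t q ix1 = three_sign tl hd sg t q ix2) <-> a_rhs ll o sb0 sb1 sb2.
Proof.
rewrite !three_signE /a_rhs !andlE; split.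
- move=> [/matchedE -> [/sgnb_inj /negb_inj -> /sgnb_inj /negb_inj ->]].
  by rewrite !eqxx.
- move=> /and3P [/matchedE H /eqP -> /eqP ->]; by [].
Qed.

Lemma pos_onE (P v : 'I_3 -> rat * rat) (sigma : 'I_3 -> 'I_3) (s u : 'I_3) : pos_on q P v sigma s u = pos (sigma s, ~~ first_on P v s u).
Proof. by rewrite /pos_on; case: (first_on P v s u). Qed.

Lemma cr_signE (v : 'I_3 -> rat * rat) (h : 'I_3 -> nat) (s u : 'I_3) : cr_sign v h s u =
  sgnb (if h u < h s then (0 < det2 (v s) (v u))%R else (0 < det2 (v u) (v s))%R).
Proof. by rewrite /cr_sign /sgn /sgnb; case: ifP. Qed.

Lemma realisesE (P v : 'I_3 -> rat * rat) (h : 'I_3 -> nat) (sigma sig : 'I_3 -> 'I_3) (hb fb db : 'I_3 -> bool) :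
  (forall s, sigma s = sig s) ->
  (forall s u, s != u -> (h u < h s) = ov hb s u) ->
  (forall s u, s != u -> first_on P v s u = Fa fb s u) ->
  (forall s u, s != u -> (0 < det2 (v s) (v u))%R = Da db s u) ->
  realises tl hd sg t q P v h sigma <-> a_realises ll sb0 sb1 sb2 sig hb fb db.
Proof.
move=> Hs Hh Hf Hd.
have PE : forall s u i, s != u ->
  ((if h u < h s
     then (val (tl (t i)) == pos_on q P v sigma s u) && (val (hd (t i)) == pos_on q P v sigma u s)
     else (val (hd (t i)) == pos_on q P v sigma s u) && (val (tl (t i)) == pos_on q P v sigma u s))
    && (sg (t i) == cr_sign v h s u))
  = ((if ov hb s u then eqS (L (i, true)) (sig s, ~~ Fa fb s u) &&& eqS (L (i, false)) (sig u, ~~ Fa fb u s)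
   else eqS (L (i, false)) (sig s, ~~ Fa fb s u) &&& eqS (L (i, true)) (sig u, ~~ Fa fb u s))
  &&& (b3 sb0 sb1 sb2 i == (if ov hb s u then Da db s u else Da db u s))).
  move=> s u i su; have us : u != s by rewrite eq_sym.
  rewrite cr_signE Hh // !pos_onE !Hs !Hf // tlE hdE !pos_eq !eqSE !Hd // sgE (inj_eq sgnb_inj).
  by [].
rewrite /realises; split.
- move=> H; apply/all3P => s; apply/all3P => u; rewrite implE eqIE; apply/implyP => su.
  case: (H s u su) => i [C1 /eqP C2]; apply/ex3P; exists i.
  by rewrite -PE // C1 C2.
- move/all3P => H s u su; move/all3P: (H s) => /(_ u); rewrite implE eqIE su /=.
  move/ex3P => [i]; rewrite -PE // => /andP[C1 /eqP C2]; exists i; split => //.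
Qed.

Lemma movable_fwd : three_movable tl hd sg t q -> a_lhs ll sb0 sb1 sb2.
Proof.
case=> sigma [sI [P [v [h [Hlg hI Hr]]]]].
have n01 : h ix0 != h ix1 by rewrite (inj_eq hI).
have n12 : h ix1 != h ix2 by rewrite (inj_eq hI).
have n02 : h ix0 != h ix2 by rewrite (inj_eq hI).
set hb := b3 (h ix1 < h ix0) (h ix2 < h ix1) (h ix0 < h ix2).
have Hh : forall s u, s != u -> (h u < h s) = ov hb s u.
  case: (ov_cases1 hb) => o1 o2 o3; case: (ov_cases2 hb) => o4 o5 o6.
  move=> s u; case: (ord3P s); case: (ord3P u) => // _;
    rewrite ?o1 ?o2 ?o3 ?o4 ?o5 ?o6 /hb ?b3_0 ?b3_1 ?b3_2; lia.
have hv : hvalid (hb ix0) (hb ix1) (hb ix2).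
  rewrite /hvalid /hb b3_0 b3_1 b3_2 !andlE !orlE; lia.
have [C HF HD] := And3 (geo_C Hlg) (@geo_F _ _ Hlg) (@geo_D _ _ Hlg).
have Hr' := (realisesE (sig := b3 (sigma ix0) (sigma ix1) (sigma ix2)) _ Hh HF HD).1.
have Hs : forall s, sigma s = b3 (sigma ix0) (sigma ix1) (sigma ix2) s.
  by move=> s; case: (ord3P s).
have R' := Hr' sigma Hs Hr.
have d10 : sigma ix1 != sigma ix0 by rewrite (inj_eq sI).
have d20 : sigma ix2 != sigma ix0 by rewrite (inj_eq sI).
have d21 : sigma ix2 != sigma ix1 by rewrite (inj_eq sI).
apply/ex3P; exists (sigma ix0); apply/ex3P; exists (sigma ix1).
rewrite andlE eqIE d10 /=; apply/ex3P; exists (sigma ix2).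
rewrite !andlE !eqIE d20 d21 /=.
apply/exbP; exists (hb ix0); apply/exbP; exists (hb ix1); apply/exbP; exists (hb ix2).
rewrite andlE hv /=.
apply/exbP; exists (fF P v ix0); apply/exbP; exists (fF P v ix1); apply/exbP; exists (fF P v ix2).
apply/exbP; exists (dD v ix0); apply/exbP; exists (dD v ix1); apply/exbP; exists (dD v ix2).
rewrite andlE C /=.
have -> : b3 (hb ix0) (hb ix1) (hb ix2) = hb by [].
by [].
Qed.

Lemma movable_bwd : a_lhs ll sb0 sb1 sb2 -> three_movable tl hd sg t q.
Proof.
move/ex3P => [x0 /ex3P [x1]]; rewrite andlE => /andP[n10 /ex3P [x2]].
rewrite !andlE => /and3P [n20 n21 /exbP [h0 /exbP [h1 /exbP [h2]]]].
rewrite andlE => /andP[hv /exbP[f0 /exbP[f1 /exbP[f2 /exbP[d0 /exbP[d1 /exbP[d2]]]]]]].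
rewrite andlE => /andP[C Hr].
rewrite !eqIE in n10 n20 n21.
have [P [v [Hlg HF HD]]] := geo_bwd C.
exists (b3 x0 x1 x2); split; first exact: b3_inj.
exists P, v, (hnat (b3 h0 h1 h2)); split => //.
- move=> s u E; case: (eqVneq s u) => // su.
  have us : u != s by rewrite eq_sym.
  have A := hnatP hv su; have B := hnatP hv us.
  rewrite E ltnn in A B.
  by rewrite ov_asym // -A in B.
- apply/(realisesE (sig := b3 x0 x1 x2) (hb := b3 h0 h1 h2) _ _ HF HD) => //.
  by move=> s u su; apply: hnatP.
Qed.

End Concrete.

Unset Implicit Arguments.
Local Open Scope ring_scope.

Theorem mainTheorem1 (n : nat) (tl hd : 'I_n -> 'I_(n.*2)) (sg : 'I_n -> int)
    (t : 'I_3 -> 'I_n) (q : 'I_3 -> 'I_(n.*2)) :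
  is_gauss tl hd sg ->
  triple_arcs tl hd t q ->
  (three_movable tl hd sg t q <->
   matched tl hd t q /\
   three_sign tl hd sg t q ix0 = three_sign tl hd sg t q ix1 /\
   three_sign tl hd sg t q ix1 = three_sign tl hd sg t q ix2).
Proof.
move=> Hg Ht.
have K : a_lhs2 (ll tl hd t q) (sb0 sg t) (sb1 sg t) (sb2 sg t)
         = a_rhs (ll tl hd t q) (o q) (sb0 sg t) (sb1 sg t) (sb2 sg t).
  move/allP: check_allP => /(_ _ (ll_perm Ht)) /allP /(_ _ (mem_tf (o q))).
  move=> /allP /(_ _ (mem_tf (sb0 sg t))) /allP /(_ _ (mem_tf (sb1 sg t))).
  by move=> /allP /(_ _ (mem_tf (sb2 sg t))) /eqP.
rewrite (rhsE Hg Ht) -K; split => H.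
- exact: lhs_lhs2 (movable_fwd Hg Ht H).
- exact: movable_bwd Hg Ht (lhs2_lhs H).
Qed.
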